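(* Let $\mathcal A=\mathbb C[z^{-1},z]]$ and let $\phi\colon H_R\to\mathcal A$ be a character. The following are equivalent: (1) For every $w\in H_R$, $\sum_w\phi(S(w_1))\,|w_2|\,\phi(w_2)\in z^{-1}\mathbb C[[z]]$, i.e. $\phi\circ(S\star Y)$ maps into $z^{-1}\mathbb C[[z]]$. (2) For every $n\ge0$ and $w\in H_R$, $\sum_w\phi(S(w_1))\,|w_2|^n\,\phi(w_2)\in z^{-n}\mathbb C[[z]]$. (3) For every $s\in\mathbb C$ and $w\in H_R$, $\sum_w\phi(S(w_1))\,e^{sz|w_2|}\,\phi(w_2)\in\mathbb C[[z]]$, i.e. $\phi^{\star-1}\star(\phi\circ\theta_{sz})$ maps into $\mathbb C[[z]]$.
   Context: $\mathbb C[z^{-1},z]]$ denotes formal Laurent series in $z$ with finitely many negative powers, $\mathbb C[[z]]$ formal power series. $H_R$ is the Connes–Kreimer Hopf algebra of rooted trees over $\mathbb C$ (basis rooted forests, $|w|$ number of nodes, coproduct $\Delta w=\sum_ww_1\otimes w_2$ determined by $\Delta\circ B_+=B_+\otimes\mathbb 1+(\mathrm{id}\otimes B_+)\circ\Delta$ with $B_+$ grafting onto a new root, antipode $S$). Sums over homogeneous components are understood by linearity. $Y$ is the grading operator $Yw=|w|w$; $\phi\circ\theta_{sz}$ is the character $w\mapsto e^{sz|w|}\phi(w)$ (with $e^{sz|w|}$ expanded as a power series in $z$). A character is a unital algebra morphism; $\phi^{\star-1}=\phi\circ S$. *)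

(* Defs.v *)
From HB Require Import structures.
From mathcomp Require Import all_boot all_order all_algebra.
From Stdlib Require List Permutation.
Set Implicit Arguments. Unset Strict Implicit. Unset Printing Implicit Defensive.
Import Order.TTheory GRing.Theory Num.Theory.
Local Open Scope ring_scope.

(* A rooted tree is represented by a planar representative: a root with an
   (ordered) list of subtrees.  A forest (basis monomial of H_R) is a list of trees; the
   product of H_R is concatenation (commutative, since characters take values
   in a commutative algebra). *)
Inductive tree : Type := Node of seq tree.
Definition forest := seq tree.

Inductive tree_iso : tree -> tree -> Prop :=
  | TIso (ts us vs : seq tree) :
      List.Forall2 tree_iso ts us -> Permutation.Permutation us vs -> tree_iso (Node ts) (Node vs).

Fixpoint tnodes (t : tree) : nat :=
  let: Node ts := t in (sumn (map tnodes ts)).+1.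
Definition fnodes (f : forest) : nat := sumn (map tnodes f).

(* Connes-Kreimer coproduct, as a list of terms  w1 (x) w2  (all coefficients 1),
   determined by  Delta (B+ f) = B+ f (x) 1 + (id (x) B+) (Delta f)
   and multiplicativity. *)
Fixpoint cop (t : tree) : seq (forest * forest) :=
  match t with
  | Node ts =>
      ([:: Node ts], [::]) ::
      [seq (p.1, [:: Node p.2]) | p <-
        (fix copF (us : seq tree) : seq (forest * forest) :=
           match us with
           | [::] => [:: ([::], [::])]
           | u :: us' => [seq (a.1 ++ b.1, a.2 ++ b.2) | a <- cop u, b <- copF us']
           end) ts]
  end.

Fixpoint copF (us : forest) : seq (forest * forest) :=
  match us with
  | [::] => [:: ([::], [::])]
  | u :: us' => [seq (a.1 ++ b.1, a.2 ++ b.2) | a <- cop u, b <- copF us']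
  end.

(* Linear combinations of forests (elements of H_R). *)
Definition lcomb (F : Type) := seq (F * forest).

Section Antipode.
Variable F : numClosedFieldType.

Definition lc_mul (l1 l2 : lcomb F) : lcomb F :=
  [seq (a.1 * b.1, a.2 ++ b.2) | a <- l1, b <- l2].

(* Antipode (with fuel), multiplicative, with
   S(t) = - sum_{(w1,w2) in Delta t, w2 <> 1} S(w1) w2   and S(1) = 1. *)
Fixpoint antipF (n : nat) (f : forest) : lcomb F :=
  match n with
  | 0 => [::]
  | n'.+1 =>
    match f with
    | [::] => [:: (1, [::])]
    | u :: us =>
        lc_mul [seq (- cg.1, cg.2 ++ p.2) | p <- behead (cop u), cg <- antipF n' p.1]
               (antipF n' us)
    end
  end.

(* fuel |f|+1 is sufficient *)
Definition antipode (f : forest) : lcomb F := antipF (fnodes f).+1 f.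

(* (k, a) represents  sum_{n>=0} a n z^(n-k). *)
Definition laurent := (nat * (nat -> F))%type.

Definition lcoef (x : laurent) (j : int) : F :=
  match (j + (x.1)%:Z)%R with Posz m => x.2 m | Negz _ => 0 end.

Definition ps_mul (a b : nat -> F) : nat -> F :=
  fun n => \sum_(i < n.+1) a i * b (n - i)%N.
Definition ps_shift (d : nat) (a : nat -> F) : nat -> F :=
  fun n => if (d <= n)%N then a (n - d)%N else 0.

Definition ls_mul (x y : laurent) : laurent := ((x.1 + y.1)%N, ps_mul x.2 y.2).
Definition ls_add (x y : laurent) : laurent :=
  let k := maxn x.1 y.1 in
  (k, fun n => ps_shift (k - x.1) x.2 n + ps_shift (k - y.1) y.2 n).
Definition ls_scale (c : F) (x : laurent) : laurent := (x.1, fun n => c * x.2 n).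
Definition ls_const (c : F) : laurent := (0%N, fun n => if n == 0%N then c else 0).
Definition ls0 : laurent := ls_const 0.
Definition ls1 : laurent := ls_const 1.
Definition ls_sum (s : seq laurent) : laurent := foldr ls_add ls0 s.
Definition ls_prod (s : seq laurent) : laurent := foldr ls_mul ls1 s.

Definition in_zpow (m : nat) (x : laurent) : Prop :=
  forall j : int, (j < - (m%:Z))%R -> lcoef x j = 0.

Definition ls_exp (c : F) : laurent := (0%N, fun n => c ^+ n / (n`!)%:R).

(* A character of H_R (free commutative algebra on isomorphism classes of
   rooted trees) is given by its values on trees, invariant under isomorphism. *)
Definition is_character (phi : tree -> laurent) : Prop :=
  forall t u, tree_iso t u -> lcoef (phi t) =1 lcoef (phi u).

Definition charF (phi : tree -> laurent) (f : forest) : laurent :=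
  ls_prod (map phi f).
Definition charL (phi : tree -> laurent) (l : lcomb F) : laurent :=
  ls_sum [seq ls_scale x.1 (charF phi x.2) | x <- l].

(* sum_w phi(S(w1)) g(w2) phi(w2), extended linearly to w in H_R *)
Definition convF (phi : tree -> laurent) (g : forest -> laurent) (f : forest) : laurent :=
  ls_sum [seq ls_mul (charL phi (antipode p.1)) (ls_mul (g p.2) (charF phi p.2))
         | p <- copF f].
Definition convL (phi : tree -> laurent) (g : forest -> laurent) (w : lcomb F) : laurent :=
  ls_sum [seq ls_scale x.1 (convF phi g x.2) | x <- w].

End Antipode.

(* Main.v *)
Require Import Defs.
From HB Require Import structures.
From mathcomp Require Import all_boot all_order all_algebra.
From mathcomp Require Import zify boolp ring.
Import Order.TTheory GRing.Theory Num.Theory.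
Local Open Scope ring_scope.
Set Implicit Arguments. Unset Strict Implicit. Unset Printing Implicit Defensive.

Section LaurentLayer.
Variable F : numClosedFieldType.
Implicit Types (a b c : nat -> F) (x y z : laurent F).

Lemma lcoefE (k : nat) (a : nat -> F) j :
  lcoef (k, a) j = if (0 <= j + k%:Z)%R then a (absz (j + k%:Z)) else 0.
Proof. rewrite /lcoef /=. by case: (j + k%:Z). Qed.

Lemma lcoef_shift k d (a : nat -> F) j : lcoef ((k + d)%N, ps_shift d a) j = lcoef (k, a) j.
Proof.
rewrite !lcoefE /ps_shift.
case: ifP => H1; case: ifP => H2 //; try case: ifP => H3 //.
all: try (congr a; lia).
all: lia.
Qed.

Lemma lcoef_ext k a b : a =1 b -> lcoef (k, a) =1 lcoef (k, b).
Proof. by move=> H j; rewrite !lcoefE H. Qed.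

Lemma lcoef_addf k a b j : lcoef (k, fun n => a n + b n) j = lcoef (k, a) j + lcoef (k, b) j.
Proof. by rewrite !lcoefE; case: ifP; rewrite ?addr0. Qed.

Lemma lcoef_scalef k (c : F) a j : lcoef (k, fun n => c * a n) j = c * lcoef (k, a) j.
Proof. by rewrite !lcoefE; case: ifP; rewrite ?mulr0. Qed.

Lemma lcoef_low x j : (j < - (x.1)%:Z)%R -> lcoef x j = 0.
Proof. case: x => k a /= H; rewrite lcoefE ifF //; lia. Qed.

Lemma lcoef_rep (M : nat) (f : int -> F) :
  (forall j, (j < - M%:Z)%R -> f j = 0) ->
  lcoef (M, fun n : nat => f (n%:Z - M%:Z)) =1 f.
Proof.
move=> H j; rewrite lcoefE; case: ifP => Hj.
  congr f; lia.
rewrite H //; lia.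
Qed.

Lemma ls_addE x y j : lcoef (ls_add x y) j = lcoef x j + lcoef y j.
Proof.
case: x y => k1 a [k2 b]; rewrite /ls_add /= lcoef_addf.
have E1 := lcoef_shift k1 (maxn k1 k2 - k1) a j.
have E2 := lcoef_shift k2 (maxn k1 k2 - k2) b j.
rewrite subnKC ?leq_maxl // in E1; rewrite subnKC ?leq_maxr // in E2.
by rewrite E1 E2.
Qed.

Lemma ls_scaleE (c : F) x j : lcoef (ls_scale c x) j = c * lcoef x j.
Proof. by case: x => k a; rewrite /ls_scale /= lcoef_scalef. Qed.

Lemma ls_constE (c : F) j : lcoef (ls_const c) j = if j == 0 then c else 0.
Proof.
rewrite lcoefE addr0 /=; case: (j =P 0) => [->|Hj] //.
case: ifP => // _; case: ifP => // /eqP; lia.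
Qed.

Definition Pn (n : nat) a : {poly F} := \poly_(i < n.+1) a i.
Lemma Pn_coef n a i : (i <= n)%N -> (Pn n a)`_i = a i.
Proof. by move=> H; rewrite /Pn coef_poly ltnS H. Qed.

Lemma psP n a b (p q : {poly F}) : (forall i, (i <= n)%N -> p`_i = a i) ->
  (forall i, (i <= n)%N -> q`_i = b i) -> ps_mul a b n = (p * q)`_n.
Proof.
move=> Hp Hq; rewrite coefM /ps_mul; apply: eq_bigr => i _.
have Hi := ltn_ord i; rewrite Hp ?Hq // ?leq_subr // -ltnS.
Qed.

Lemma PnM_coef n a b i : (i <= n)%N -> (Pn n a * Pn n b)`_i = ps_mul a b i.
Proof. move=> Hi; symmetry; apply: psP => k Hk; apply: Pn_coef; exact: leq_trans Hk Hi. Qed.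

Lemma ps_mulA a b c n : ps_mul (ps_mul a b) c n = ps_mul a (ps_mul b c) n.
Proof.
rewrite (@psP n _ _ (Pn n a * Pn n b) (Pn n c)); last by move=> *; rewrite Pn_coef.
  rewrite (@psP n _ _ (Pn n a) (Pn n b * Pn n c)) ?mulrA //.
    by move=> *; rewrite Pn_coef.
  by move=> i Hi; rewrite PnM_coef.
by move=> i Hi; rewrite PnM_coef.
Qed.

Lemma ps_mulC a b n : ps_mul a b n = ps_mul b a n.
Proof.
rewrite (@psP n _ _ (Pn n a) (Pn n b)) ?(@psP n _ _ (Pn n b) (Pn n a)); first by rewrite mulrC.
all: by move=> *; rewrite Pn_coef.
Qed.

Lemma ps_mul_shift d a b n : ps_mul (ps_shift d a) b n = ps_shift d (ps_mul a b) n.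
Proof.
rewrite (@psP n _ _ ('X^d * Pn n a) (Pn n b)); last by move=> *; rewrite Pn_coef.
  rewrite -mulrA coefXnM /ps_shift; case: ifP => H; case: ifP => H' //; try lia.
  rewrite (@psP (n - d) _ _ (Pn n a) (Pn n b)) // => *; rewrite Pn_coef //; lia.
move=> i Hi; rewrite coefXnM /ps_shift; case: ifP => H; case: ifP => H' //; try lia.
rewrite Pn_coef //; lia.
Qed.

Lemma ps_mul_addl a b c n : ps_mul (fun m => a m + b m) c n = ps_mul a c n + ps_mul b c n.
Proof. by rewrite /ps_mul -big_split; apply: eq_bigr => i _; rewrite mulrDl. Qed.

Lemma ps_mul_const (c : F) b n : ps_mul (fun m => if m == 0%N then c else 0) b n = c * b n.
Proof.
rewrite /ps_mul big_ord_recl /= subn0 big1 ?addr0 // => i _.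
by rewrite mul0r.
Qed.

Lemma ls_mul_norm x y d : lcoef (ls_mul ((x.1 + d)%N, ps_shift d x.2) y) =1 lcoef (ls_mul x y).
Proof.
case: x y => k a [l b] j; rewrite /ls_mul /=.
rewrite (lcoef_ext _ (ps_mul_shift d a b)).
have -> : (k + d + l = k + l + d)%N by lia.
by rewrite lcoef_shift.
Qed.

Lemma lcoef_at x (n : nat) : lcoef x (n%:Z - (x.1)%:Z) = x.2 n.
Proof. case: x => k a; rewrite lcoefE /= ifT; [congr a; lia | lia]. Qed.

Lemma ls_mul_congl x x' y : lcoef x =1 lcoef x' -> lcoef (ls_mul x y) =1 lcoef (ls_mul x' y).
Proof.
move=> H j.
rewrite -(ls_mul_norm x y (maxn x.1 x'.1 - x.1)) -(ls_mul_norm x' y (maxn x.1 x'.1 - x'.1)).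
rewrite subnKC ?leq_maxl // subnKC ?leq_maxr //.
apply: lcoef_ext => n /=; case: y => l b; apply: eq_bigr => i _.
congr (_ * _).
set M := maxn x.1 x'.1.
have Hs : forall z, (z.1 <= M)%N -> ps_shift (M - z.1) z.2 i = lcoef z (i%:Z - M%:Z).
  move=> [k a] /= Hz; rewrite -(lcoef_shift k (M - k) a) subnKC // lcoefE ifT; last by lia.
  congr ps_shift; lia.
by rewrite !Hs ?leq_maxl ?leq_maxr.
Qed.
Lemma ls_mul_comm x y : lcoef (ls_mul x y) =1 lcoef (ls_mul y x).
Proof.
case: x y => k a [l b] j; rewrite /ls_mul /= addnC.
apply: lcoef_ext => n; exact: ps_mulC.
Qed.

Lemma ls_mul_congr x y y' : lcoef y =1 lcoef y' -> lcoef (ls_mul x y) =1 lcoef (ls_mul x y').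
Proof.
move=> H j; rewrite ls_mul_comm (ls_mul_congl _ H) ls_mul_comm //.
Qed.

Lemma ls_mul_assoc x y z : lcoef (ls_mul (ls_mul x y) z) =1 lcoef (ls_mul x (ls_mul y z)).
Proof.
case: x y z => k a [l b] [m c] j; rewrite /ls_mul /= addnA.
apply: lcoef_ext => n; exact: ps_mulA.
Qed.

Lemma ls_mul_addf k a b y j :
  lcoef (ls_mul (k, fun n => a n + b n) y) j = lcoef (ls_mul (k, a) y) j + lcoef (ls_mul (k, b) y) j.
Proof.
case: y => l c; rewrite /ls_mul /= -lcoef_addf.
apply: lcoef_ext => n; exact: ps_mul_addl.
Qed.

Lemma ls_mul_addl x x' y j :
  lcoef (ls_mul (ls_add x x') y) j = lcoef (ls_mul x y) j + lcoef (ls_mul x' y) j.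
Proof.
rewrite /ls_add ls_mul_addf.
have E1 := ls_mul_norm x y (maxn x.1 x'.1 - x.1) j.
have E2 := ls_mul_norm x' y (maxn x.1 x'.1 - x'.1) j.
rewrite subnKC ?leq_maxl // in E1; rewrite subnKC ?leq_maxr // in E2.
by rewrite E1 E2.
Qed.

Lemma ls_mul_const (c : F) y : lcoef (ls_mul (ls_const c) y) =1 lcoef (ls_scale c y).
Proof.
case: y => l b j; rewrite /ls_mul /ls_scale /= add0n.
apply: lcoef_ext => n; exact: ps_mul_const.
Qed.

End LaurentLayer.

Section LSring.
Variable F : numClosedFieldType.

Definition bnd (f : int -> F) := exists K : nat, forall j, (j < - K%:Z)%R -> f j = 0.
Definition LS := {f : int -> F | bnd f}.
HB.instance Definition _ := gen_eqMixin LS.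
HB.instance Definition _ := gen_choiceMixin LS.

Definition Kof (f : LS) : nat := projT1 (cid (proj2_sig f)).
Lemma KofP (f : LS) j : (j < - (Kof f)%:Z)%R -> sval f j = 0.
Proof. exact: (projT2 (cid (proj2_sig f))). Qed.

Definition rep (f : LS) : laurent F := (Kof f, fun n : nat => sval f (n%:Z - (Kof f)%:Z)).
Lemma lcoef_repf f : lcoef (rep f) =1 sval f.
Proof. apply: lcoef_rep; exact: KofP. Qed.

Lemma bnd_lcoef (x : laurent F) : bnd (lcoef x).
Proof. by exists x.1 => j Hj; apply: lcoef_low. Qed.

Definition toLS (x : laurent F) : LS := exist _ (lcoef x) (bnd_lcoef x).

Lemma LSext (f g : LS) : sval f =1 sval g -> f = g.
Proof.
case: f g => f Hf [g Hg] /= H; have E := funext H; subst g.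
by congr exist; apply: Prop_irrelevance.
Qed.

Lemma toLS_rep f : toLS (rep f) = f.
Proof. by apply: LSext => j /=; rewrite lcoef_repf. Qed.

Definition LSzero : LS := toLS (ls_const 0).
Definition LSadd (f g : LS) : LS := toLS (ls_add (rep f) (rep g)).
Definition LSopp (f : LS) : LS := toLS (ls_scale (-1) (rep f)).
Definition LSone : LS := toLS (ls_const 1).
Definition LSmul (f g : LS) : LS := toLS (ls_mul (rep f) (rep g)).

Lemma LSaddE f g j : sval (LSadd f g) j = sval f j + sval g j.
Proof. by rewrite /= ls_addE !lcoef_repf. Qed.
Lemma LSzeroE j : sval LSzero j = 0.
Proof. by rewrite /= ls_constE; case: ifP. Qed.
Lemma LSoppE f j : sval (LSopp f) j = - sval f j.
Proof. by rewrite /= ls_scaleE lcoef_repf mulN1r. Qed.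

Lemma LS_addA : associative LSadd.
Proof. by move=> f g h; apply: LSext => j; rewrite !LSaddE addrA. Qed.
Lemma LS_addC : commutative LSadd.
Proof. by move=> f g; apply: LSext => j; rewrite !LSaddE addrC. Qed.
Lemma LS_add0 : left_id LSzero LSadd.
Proof. by move=> f; apply: LSext => j; rewrite !LSaddE LSzeroE add0r. Qed.
Lemma LS_addN : left_inverse LSzero LSopp LSadd.
Proof. by move=> f; apply: LSext => j; rewrite !LSaddE LSoppE LSzeroE addNr. Qed.

HB.instance Definition _ := GRing.isZmodule.Build LS LS_addA LS_addC LS_add0 LS_addN.

Lemma LSmulE f g : sval (LSmul f g) = lcoef (ls_mul (rep f) (rep g)).
Proof. by []. Qed.

Lemma toLS_mul x y : toLS (ls_mul x y) = LSmul (toLS x) (toLS y).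
Proof.
apply: LSext => j /=.
rewrite (ls_mul_congl _ (lcoef_repf (toLS x))) (ls_mul_congr _ (lcoef_repf (toLS y))) //.
Qed.

Lemma LS_mulA : associative LSmul.
Proof.
move=> f g h; apply: LSext => j; rewrite /= (ls_mul_congl _ (lcoef_repf (LSmul f g))).
rewrite (ls_mul_congr _ (lcoef_repf (LSmul g h))) /=.
by rewrite ls_mul_assoc.
Qed.
Lemma LS_mulC : commutative LSmul.
Proof. by move=> f g; apply: LSext => j; rewrite /= ls_mul_comm. Qed.
Lemma LS_mul1 : left_id LSone LSmul.
Proof.
move=> f; apply: LSext => j; rewrite /= (ls_mul_congl _ (lcoef_repf LSone)) /=.
by rewrite ls_mul_const ls_scaleE mul1r lcoef_repf.
Qed.
Lemma LS_mulDl : left_distributive LSmul LSadd.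
Proof.
move=> f g h; apply: LSext => j; rewrite /= (ls_mul_congl _ (lcoef_repf (LSadd f g))) /=.
by rewrite ls_mul_addl ls_addE !lcoef_repf.
Qed.
Lemma LS_one_neq0 : LSone != LSzero.
Proof.
apply/eqP => E; have := congr1 (fun f : LS => sval f 0) E.
by rewrite /= !ls_constE eqxx; apply/eqP; rewrite oner_neq0.
Qed.

HB.instance Definition _ := GRing.Zmodule_isComNzRing.Build LS LS_mulA LS_mulC LS_mul1 LS_mulDl LS_one_neq0.

End LSring.


Section LSfacts.
Variable F : numClosedFieldType.
Local Notation LS := (LS F).
Implicit Types (f g h : LS) (x y : laurent F).

Lemma LSadd_val f g j : sval (f + g) j = sval f j + sval g j.
Proof. exact: LSaddE. Qed.
Lemma LS0_val j : sval (0 : LS) j = 0.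
Proof. exact: LSzeroE. Qed.
Lemma LSmul_val f g : sval (f * g) = lcoef (ls_mul (rep f) (rep g)).
Proof. by []. Qed.
Lemma toLS_val x : sval (toLS x) = lcoef x.
Proof. by []. Qed.

Definition cst (c : F) : LS := toLS (ls_const c).

Lemma toLS_add x y : toLS (ls_add x y) = toLS x + toLS y.
Proof. by apply: LSext => j; rewrite LSadd_val /= ls_addE. Qed.
Lemma toLS_mulE x y : toLS (ls_mul x y) = toLS x * toLS y.
Proof. exact: toLS_mul. Qed.
Lemma toLS_scale c x : toLS (ls_scale c x) = cst c * toLS x.
Proof.
rewrite /cst -toLS_mulE; apply: LSext => j /=.
by rewrite ls_mul_const.
Qed.
Lemma cst0 : cst 0 = 0.
Proof. by []. Qed.
Lemma cst1 : cst 1 = 1.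
Proof. by []. Qed.
Lemma toLS_ls0 : toLS (ls0 F) = 0.
Proof. by []. Qed.
Lemma toLS_ls1 : toLS (ls1 F) = 1.
Proof. by []. Qed.
Lemma cstD a b : cst (a + b) = cst a + cst b.
Proof. by apply: LSext => j; rewrite LSadd_val /= !ls_constE; case: ifP; rewrite ?addr0. Qed.
Lemma cstM a b : cst (a * b) = cst a * cst b.
Proof.
rewrite /cst -toLS_mulE; apply: LSext => j /=.
by rewrite ls_mul_const ls_scaleE !ls_constE; case: ifP; rewrite ?mulr0.
Qed.
Lemma cstN a : cst (- a) = - cst a.
Proof. by apply/eqP; rewrite -subr_eq0 opprK -cstD addNr. Qed.
Lemma cst_nat n : cst n%:R = n%:R.
Proof. elim: n => [|n IH]; first by []. by rewrite -addn1 !natrD cstD IH cst1. Qed.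
Lemma cstX a n : cst (a ^+ n) = cst a ^+ n.
Proof. elim: n => [|n IH]; first by []. by rewrite !exprS cstM IH. Qed.

Lemma toLS_sum (s : seq (laurent F)) : toLS (ls_sum s) = \sum_(x <- s) toLS x.
Proof. elim: s => [|x s IH]; first by rewrite big_nil. by rewrite big_cons /= toLS_add IH. Qed.
Lemma toLS_prod (s : seq (laurent F)) : toLS (ls_prod s) = \prod_(x <- s) toLS x.
Proof. elim: s => [|x s IH]; first by rewrite big_nil. by rewrite big_cons /= toLS_mulE IH. Qed.

Definition zp (m : nat) f := forall j, (j < - m%:Z)%R -> sval f j = 0.

Lemma zp_in m x : in_zpow m x <-> zp m (toLS x).
Proof. by []. Qed.

Lemma zp0 m : zp m 0.
Proof. by move=> j _; rewrite LS0_val. Qed.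
Lemma zpD m f g : zp m f -> zp m g -> zp m (f + g).
Proof. by move=> Hf Hg j Hj; rewrite LSadd_val Hf ?Hg ?addr0. Qed.
Lemma zp_sum m I (s : seq I) (G : I -> LS) : (forall i, zp m (G i)) -> zp m (\sum_(i <- s) G i).
Proof.
move=> H; elim: s => [|i s IH]; first by rewrite big_nil; exact: zp0.
by rewrite big_cons; apply: zpD.
Qed.
Lemma zp_le m m' f : (m <= m')%N -> zp m f -> zp m' f.
Proof. move=> Hm H j Hj; apply: H; lia. Qed.

Lemma lcoef_rep_zp m f : zp m f -> lcoef (m, fun n : nat => sval f (n%:Z - m%:Z)) =1 lcoef (rep f).
Proof. by move=> H j; rewrite lcoef_rep // lcoef_repf. Qed.

Lemma zpM a b f g : zp a f -> zp b g -> zp (a + b) (f * g).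
Proof.
move=> Hf Hg j Hj; rewrite LSmul_val -(ls_mul_congl _ (lcoef_rep_zp Hf)).
rewrite -(ls_mul_congr _ (lcoef_rep_zp Hg)) lcoef_low //= -?natrD //.
Qed.

Lemma zp_cst c : zp 0 (cst c).
Proof. by move=> j Hj; rewrite /= ls_constE ifF //; apply/eqP; lia. Qed.

Lemma zp_cstM m c f : zp m f -> zp m (cst c * f).
Proof. by move=> H; have := zpM (zp_cst c) H. Qed.

Lemma zpN m f : zp m f -> zp m (- f).
Proof. by move=> H; rewrite -mulN1r -cst1 -cstN; apply: zp_cstM. Qed.

Lemma zp_sval_eq f g : f = g -> sval f =1 sval g.
Proof. by move->. Qed.

Lemma mul_coef0 K e g j : zp 0 e -> zp K g ->
  sval (e * g) j = if (0 <= j + K%:Z)%R then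
     \sum_(i < (absz (j + K%:Z)).+1) sval e i%:Z * sval g (j - i%:Z) else 0.
Proof.
move=> He Hg; rewrite LSmul_val -(ls_mul_congl _ (lcoef_rep_zp He)).
rewrite -(ls_mul_congr _ (lcoef_rep_zp Hg)) /ls_mul /= lcoefE add0n.
case: ifP => // H; rewrite /ps_mul; apply: eq_bigr => -[i Hi] _ /=.
congr (sval e _ * sval g _); lia.
Qed.

End LSfacts.


Lemma tree_ind2 (P : tree -> Prop) :
  (forall ts, (forall t, List.In t ts -> P t) -> P (Node ts)) -> forall t, P t.
Proof.
move=> IH; fix self 1 => -[ts]; apply: IH.
elim: ts => [|u us IHus] t /=; first (move=> H; exfalso; exact: H).
move=> -[<-|H]; [exact: self | exact: IHus].
Qed.

Lemma tf_ind (PT : tree -> Prop) (PF : forest -> Prop) :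
  PF [::] -> (forall u us, PT u -> PF us -> PF (u :: us)) ->
  (forall ts, PF ts -> PT (Node ts)) -> (forall t, PT t) /\ (forall f, PF f).
Proof.
move=> H0 HC HN.
have HT : forall t, PT t.
  apply: tree_ind2 => ts Hts; apply: HN.
  elim: ts Hts => [|u us IH] Hts //; apply: HC; first by apply: Hts; left.
  by apply: IH => t Ht; apply: Hts; right.
split=> // f; elim: f => // u us IH; exact: HC.
Qed.

Lemma copE ts : cop (Node ts) = ([:: Node ts], [::]) :: [seq (p.1, [:: Node p.2]) | p <- copF ts].
Proof. by []. Qed.
Lemma copF_nil : copF [::] = [:: ([::], [::])].
Proof. by []. Qed.
Lemma copF_cons u us : copF (u :: us) = [seq (a.1 ++ b.1, a.2 ++ b.2) | a <- cop u, b <- copF us].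
Proof. by []. Qed.

Arguments copF : simpl never.
Arguments cop : simpl never.

Section Combi.
Variable R : nmodType.

Lemma big_copF_cons u us (G : forest * forest -> R) :
  \sum_(p <- copF (u :: us)) G p = \sum_(a <- cop u) \sum_(b <- copF us) G (a.1 ++ b.1, a.2 ++ b.2).
Proof. by rewrite copF_cons big_allpairs_dep. Qed.

Lemma big_copF_cat x y (G : forest * forest -> R) :
  \sum_(p <- copF (x ++ y)) G p = \sum_(a <- copF x) \sum_(b <- copF y) G (a.1 ++ b.1, a.2 ++ b.2).
Proof.
elim: x G => [|u x IH] G.
  by rewrite copF_nil big_cons big_nil addr0; apply: eq_bigr => -[].
rewrite cat_cons big_copF_cons big_copF_cons.
apply: eq_bigr => a _; rewrite IH /=; apply: eq_bigr => c _; apply: eq_bigr => d _.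
by rewrite !catA.
Qed.

Lemma big_copF1 t (G : forest * forest -> R) :
  \sum_(p <- copF [:: t]) G p = \sum_(a <- cop t) G a.
Proof.
rewrite big_copF_cons; apply: eq_bigr => -[a1 a2] _.
by rewrite copF_nil big_cons big_nil addr0 /= !cats0.
Qed.

Definition coassT t := forall G : forest -> forest -> forest -> R,
  \sum_(p <- cop t) \sum_(q <- copF p.1) G q.1 q.2 p.2 =
  \sum_(p <- cop t) \sum_(q <- copF p.2) G p.1 q.1 q.2.
Definition coassF f := forall G : forest -> forest -> forest -> R,
  \sum_(p <- copF f) \sum_(q <- copF p.1) G q.1 q.2 p.2 =
  \sum_(p <- copF f) \sum_(q <- copF p.2) G p.1 q.1 q.2.

Lemma coass_all : (forall t, coassT t) /\ (forall f, coassF f).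
Proof.
apply: tf_ind.
- by move=> G; rewrite copF_nil !big_cons !big_nil /=.
- move=> u us Hu Hus G.
  rewrite !big_copF_cons.
  transitivity (\sum_(a <- cop u) \sum_(c <- copF a.1) \sum_(b <- copF us)
      \sum_(d <- copF b.1) G (c.1 ++ d.1) (c.2 ++ d.2) (a.2 ++ b.2)).
    apply: eq_bigr => a _; under eq_bigr => b _ do rewrite big_copF_cat.
    by rewrite exchange_big.
  rewrite (Hu (fun x y z => \sum_(b <- copF us) \sum_(d <- copF b.1) G (x ++ d.1) (y ++ d.2) (z ++ b.2))).
  apply: eq_bigr => a _ /=.
  under eq_bigr => c _ do rewrite (Hus (fun x y z => G (a.1 ++ x) (c.1 ++ y) (c.2 ++ z))) /=.
  rewrite exchange_big; apply: eq_bigr => b _ /=; rewrite big_copF_cat.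
  by [].
move=> ts IH G.
have -> : \sum_(p <- cop (Node ts)) \sum_(q <- copF p.1) G q.1 q.2 p.2 =
   G [:: Node ts] [::] [::] + \sum_(p <- copF ts) G p.1 [:: Node p.2] [::] +
   \sum_(p <- copF ts) \sum_(q <- copF p.1) G q.1 q.2 [:: Node p.2].
  by rewrite copE big_cons big_map big_copF1 copE big_cons big_map.
have -> : \sum_(p <- cop (Node ts)) \sum_(q <- copF p.2) G p.1 q.1 q.2 =
   G [:: Node ts] [::] [::] + (\sum_(p <- copF ts) G p.1 [:: Node p.2] [::] +
   \sum_(p <- copF ts) \sum_(q <- copF p.2) G p.1 q.1 [:: Node q.2]).
  rewrite copE big_cons big_map copF_nil big_cons big_nil addr0 -big_split.
  congr (_ + _); apply: eq_bigr => p _.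
  by rewrite big_copF1 copE big_cons big_map.
rewrite -addrA; congr (_ + (_ + _)).
exact: (IH (fun x y z => G x y [:: Node z])).
Qed.

Lemma coassF_all f : coassF f.
Proof. by case: coass_all. Qed.


Lemma eps_all :
  (forall t (H : forest -> R), \sum_(a <- cop t) (if a.1 is [::] then H a.2 else 0) = H [:: t]) /\
  (forall f (H : forest -> R), \sum_(p <- copF f) (if p.1 is [::] then H p.2 else 0) = H f).
Proof.
apply: tf_ind.
- by move=> H; rewrite copF_nil big_cons big_nil addr0.
- move=> u us Hu Hus H; rewrite big_copF_cons.
  rewrite -(Hu (fun z => H (z ++ us))); apply: eq_bigr => -[a1 a2] _ /=.
  case: a1 => [|x a1] /=; first exact: (Hus (fun z => H (a2 ++ z))).
  by rewrite big1.
- move=> ts IH H; rewrite copE big_cons big_map /= add0r.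
  exact: (IH (fun z => H [:: Node z])).
Qed.

Lemma epsL f (H : forest -> R) : \sum_(p <- copF f) (if p.1 is [::] then H p.2 else 0) = H f.
Proof. by case: eps_all => _; apply. Qed.

Lemma epsR_all :
  (forall t (H : forest -> R), \sum_(a <- cop t) (if a.2 is [::] then H a.1 else 0) = H [:: t]) /\
  (forall f (H : forest -> R), \sum_(p <- copF f) (if p.2 is [::] then H p.1 else 0) = H f).
Proof.
apply: tf_ind.
- by move=> H; rewrite copF_nil big_cons big_nil addr0.
- move=> u us Hu Hus H; rewrite big_copF_cons.
  rewrite -(Hu (fun z => H (z ++ us))); apply: eq_bigr => -[a1 a2] _ /=.
  case: a2 => [|x a2] /=; first exact: (Hus (fun z => H (a1 ++ z))).
  by rewrite big1.
- move=> ts IH H; rewrite copE big_cons big_map /= big1 ?addr0 //.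
Qed.

Lemma epsR f (H : forest -> R) : \sum_(p <- copF f) (if p.2 is [::] then H p.1 else 0) = H f.
Proof. by case: epsR_all => _; apply. Qed.

Lemma eq_big_all T (P : pred T) s (G G' : T -> R) : all P s ->
  (forall x, P x -> G x = G' x) -> \sum_(x <- s) G x = \sum_(x <- s) G' x.
Proof.
move=> Hs HG; elim: s Hs => [|x s IH] /=; first by rewrite !big_nil.
by case/andP => Hx Hs; rewrite !big_cons HG // IH.
Qed.
End Combi.

Lemma all_allpairs (S T U : Type) (f : S -> T -> U) (s : seq S) (t : S -> seq T) (P : pred U) :
  all P [seq f x y | x <- s, y <- t x] = all (fun x => all (fun y => P (f x y)) (t x)) s.
Proof. by elim: s => [|x s IH] //=; rewrite all_cat all_map IH. Qed.

Lemma fnodes_cat a b : fnodes (a ++ b) = (fnodes a + fnodes b)%N.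
Proof. by rewrite /fnodes map_cat sumn_cat. Qed.

Lemma fnodes_cons u us : fnodes (u :: us) = (tnodes u + fnodes us)%N.
Proof. by []. Qed.

Lemma tnodes_Node ts : tnodes (Node ts) = (fnodes ts).+1.
Proof. by []. Qed.

Lemma size_all :
  (forall t, all (fun p => fnodes p.1 + fnodes p.2 == tnodes t)%N (cop t)) /\
  (forall f, all (fun p => fnodes p.1 + fnodes p.2 == fnodes f)%N (copF f)).
Proof.
apply: tf_ind.
- by rewrite copF_nil.
- move=> u us Hu Hus; rewrite copF_cons all_allpairs.
  apply: sub_all Hu => a /eqP Ha; apply: sub_all Hus => b /eqP Hb /=.
  by rewrite !fnodes_cat fnodes_cons -Ha -Hb addnACA.
- move=> ts IH; rewrite copE /= all_map; apply/andP; split.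
    by rewrite fnodes_cons addn0 addn0.
  apply: sub_all IH => p /eqP Hp /=.
  by rewrite fnodes_cons addn0 addnS; apply/eqP; congr S; exact: Hp.
Qed.

Lemma sizeF f : all (fun p => fnodes p.1 + fnodes p.2 == fnodes f)%N (copF f).
Proof. by case: size_all. Qed.

Lemma nodes_behead t : all (fun p => fnodes p.1 < tnodes t)%N (behead (cop t)).
Proof.
case: t => ts; rewrite copE /= all_map; apply: sub_all (sizeF ts) => p /eqP Hp /=.
by rewrite ltnS -[X in (_ <= X)%N]/(fnodes ts) -Hp leq_addr.
Qed.

Lemma tnodes_gt0 t : (0 < tnodes t)%N.
Proof. by case: t. Qed.


Arguments copF : simpl never.
Arguments cop : simpl never.

Section Conv.
Variable R : comNzRingType.
Implicit Types (a b c : forest -> R).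

Definition conv a b f := \sum_(p <- copF f) a p.1 * b p.2.
Definition eps (f : forest) : R := if f is [::] then 1 else 0.
Definition Yop a f := (fnodes f)%:R * a f.

Lemma conv_assoc a b c f : conv (conv a b) c f = conv a (conv b c) f.
Proof.
rewrite /conv.
under eq_bigr => p _ do rewrite big_distrl /=.
rewrite (coassF_all f (fun x y z => a x * b y * c z)).
apply: eq_bigr => p _; rewrite big_distrr; apply: eq_bigr => q _; exact: (esym (mulrA _ _ _)).
Qed.

Lemma conv_epsl b f : conv eps b f = b f.
Proof.
rewrite /conv -(epsL f b); apply: eq_bigr => -[[|x p1] p2] _ /=; by rewrite ?mul1r ?mul0r.
Qed.

Lemma conv_epsr a f : conv a eps f = a f.
Proof.
rewrite /conv -(epsR f a); apply: eq_bigr => -[p1 [|x p2]] _ /=; by rewrite ?mulr1 ?mulr0.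
Qed.

Lemma conv_extl a a' b f : a =1 a' -> conv a b f = conv a' b f.
Proof. by move=> H; apply: eq_bigr => p _; rewrite H. Qed.
Lemma conv_extr a b b' f : b =1 b' -> conv a b f = conv a b' f.
Proof. by move=> H; apply: eq_bigr => p _; rewrite H. Qed.

Lemma conv_addr a b b' f : conv a (fun g => b g + b' g) f = conv a b f + conv a b' f.
Proof. by rewrite /conv -big_split; apply: eq_bigr => p _; rewrite mulrDr. Qed.

Lemma Yop_conv a b f : Yop (conv a b) f = conv (Yop a) b f + conv a (Yop b) f.
Proof.
rewrite /Yop /conv big_distrr -big_split.
apply: (eq_big_all (sizeF f)) => p /eqP Hp /=.
rewrite -Hp natrD /=; ring.
Qed.
End Conv.

Section Phi.
Variable F : numClosedFieldType.
Variable phi : tree -> laurent F.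
Local Notation LS := (LS F).

Definition Phi t : LS := toLS (phi t).
Definition phiF (f : forest) : LS := \prod_(t <- f) Phi t.
Definition CL (l : lcomb F) : LS := \sum_(x <- l) cst x.1 * phiF x.2.

Lemma toLS_charF f : toLS (charF phi f) = phiF f.
Proof. by rewrite /charF toLS_prod big_map. Qed.
Lemma toLS_charL l : toLS (charL phi l) = CL l.
Proof.
rewrite /charL toLS_sum big_map; apply: eq_bigr => x _.
by rewrite toLS_scale toLS_charF.
Qed.
Lemma phiF_cat f g : phiF (f ++ g) = phiF f * phiF g.
Proof. by rewrite /phiF big_cat. Qed.

Lemma CL_mul l1 l2 : CL (lc_mul l1 l2) = CL l1 * CL l2.
Proof.
rewrite /CL /lc_mul big_allpairs_dep big_distrlr; apply: eq_bigr => a _.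
apply: eq_bigr => b _ /=; by rewrite cstM phiF_cat mulrACA.
Qed.

Definition psn n f := CL (antipF F n f).

Lemma psn_nil n : psn n.+1 [::] = 1.
Proof. by rewrite /psn /= /CL big_cons big_nil addr0 /= cst1 mul1r /phiF big_nil. Qed.

Lemma psn_cons n u us : psn n.+1 (u :: us) =
  (- \sum_(p <- behead (cop u)) psn n p.1 * phiF p.2) * psn n us.
Proof.
rewrite /psn /= CL_mul; congr (_ * _).
rewrite /CL big_allpairs_dep -sumrN; apply: eq_bigr => p _.
rewrite big_distrl -sumrN; apply: eq_bigr => cg _ /=.
by rewrite cstN phiF_cat mulNr mulrA.
Qed.

Lemma psn_fuel n : forall m f, (fnodes f < n)%N -> (fnodes f < m)%N -> psn n f = psn m f.
Proof.
elim: n => [|n IH] [|m] f //.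
case: f => [|u us] Hn Hm; first by rewrite !psn_nil.
rewrite !psn_cons; congr (- _ * _).
  apply: (eq_big_all (nodes_behead u)) => p Hp; congr (_ * _); apply: IH.
    move: Hn; rewrite fnodes_cons; lia.
  move: Hm; rewrite fnodes_cons; lia.
have Hu := tnodes_gt0 u.
apply: IH; move: Hn Hm Hu; rewrite fnodes_cons; lia.
Qed.

Definition psi f := psn (fnodes f).+1 f.

Lemma psi_nil : psi [::] = 1.
Proof. exact: psn_nil. Qed.

Lemma psi_cons u us : psi (u :: us) =
  (- \sum_(p <- behead (cop u)) psi p.1 * phiF p.2) * psi us.
Proof.
rewrite /psi psn_cons; have Hu := tnodes_gt0 u; congr (- _ * _).
  apply: (eq_big_all (nodes_behead u)) => p Hp; congr (_ * _); apply: psn_fuel => //.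
  rewrite fnodes_cons; lia.
apply: psn_fuel => //; rewrite fnodes_cons; lia.
Qed.

Lemma psi_cat f g : psi (f ++ g) = psi f * psi g.
Proof.
elim: f => [|u f IH]; first by rewrite psi_nil mul1r.
by rewrite cat_cons !psi_cons IH mulrA.
Qed.

Lemma conv_psi_phi f : conv psi phiF f = eps LS f.
Proof.
case: f => [|u us].
  by rewrite /conv copF_nil big_cons big_nil addr0 /= psi_nil mul1r /phiF big_nil.
rewrite /conv big_copF_cons /=.
transitivity ((\sum_(a <- cop u) psi a.1 * phiF a.2) *
              (\sum_(b <- copF us) psi b.1 * phiF b.2)).
  rewrite big_distrlr; apply: eq_bigr => a _; apply: eq_bigr => b _ /=.
  by rewrite psi_cat phiF_cat mulrACA.
suff -> : \sum_(a <- cop u) psi a.1 * phiF a.2 = 0 by rewrite mul0r.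
have E : psi [:: u] = - \sum_(p <- behead (cop u)) psi p.1 * phiF p.2.
  by rewrite psi_cons psi_nil mulr1.
case: u E => ts E; rewrite copE big_cons /= /phiF big_nil mulr1 E.
by rewrite copE /= addNr.
Qed.

Lemma fnodes_gt0 x f : (0 < fnodes (x :: f))%N.
Proof. by rewrite fnodes_cons; have := tnodes_gt0 x; lia. Qed.

Lemma conv_phi_psi f : conv phiF psi f = eps LS f.
Proof.
move: {2}(fnodes f) (leqnn (fnodes f)) => n; elim: n f => [|n IH] f Hf.
  case: f Hf => [|x f] Hf.
    by rewrite /conv copF_nil big_cons big_nil addr0 /= psi_nil mulr1 /phiF big_nil.
  by have := fnodes_gt0 x f; lia.
case: f Hf => [|x f] Hf.
  by rewrite /conv copF_nil big_cons big_nil addr0 /= psi_nil mulr1 /phiF big_nil.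
set g := x :: f.
have H1 : conv psi (conv phiF psi) g = psi g.
  rewrite -conv_assoc (@conv_extl _ _ (eps LS)); first exact: conv_epsl.
  exact: conv_psi_phi.
have H2 : conv psi (conv phiF psi) g =
   conv phiF psi g + \sum_(p <- copF g) (if p.1 is [::] then 0 else psi p.1 * conv phiF psi p.2).
  rewrite /conv -[X in X + _](epsL g (fun z => conv phiF psi z)) -big_split.
  apply: eq_bigr => -[[|y p1] p2] _ /=; by rewrite ?psi_nil ?mul1r ?addr0 ?add0r.
have H3 : \sum_(p <- copF g) (if p.1 is [::] then 0 else psi p.1 * conv phiF psi p.2) =
          \sum_(p <- copF g) (if p.1 is [::] then 0 else psi p.1 * eps LS p.2).
  apply: (eq_big_all (sizeF g)) => -[[|y p1] p2] /eqP Hp //=.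
  rewrite IH //; move: Hp Hf; rewrite /g /=; have := fnodes_gt0 y p1; lia.
have H4 : \sum_(p <- copF g) (if p.1 is [::] then 0 else psi p.1 * eps LS p.2) =
          psi g - eps LS g.
  apply/eqP; rewrite eq_sym subr_eq -(conv_epsr psi g) /conv.
  rewrite -[X in _ == _ + X](epsL g (fun z => eps LS z)) -big_split /=.
  apply/eqP; apply: eq_bigr => -[[|y p1] p2] _ /=; by rewrite ?psi_nil ?mul1r ?addr0 ?add0r.
have E0 : eps LS g = 0 by [].
rewrite H2 H3 H4 E0 subr0 in H1.
by rewrite E0; apply: (addIr (psi g)); rewrite add0r.
Qed.

Definition Bn (n : nat) f : LS := (fnodes f)%:R ^+ n * phiF f.
Definition An (n : nat) f : LS := conv psi (Bn n) f.

Lemma Bn_conv n f : Bn n f = conv phiF (An n) f.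
Proof.
rewrite /An -(conv_assoc phiF psi) (@conv_extl _ _ (eps LS)); first by rewrite conv_epsl.
exact: conv_phi_psi.
Qed.

Lemma An0 f : An 0 f = eps LS f.
Proof.
rewrite /An -conv_psi_phi; apply: conv_extr => g; by rewrite /Bn expr0 mul1r.
Qed.

Lemma An_rec n f : An n.+1 f = conv (An 1) (An n) f + (fnodes f)%:R * An n f.
Proof.
have E : forall g, Bn n.+1 g = conv (Bn 1) (An n) g + conv phiF (Yop (An n)) g.
  move=> g; have -> : Bn n.+1 g = Yop (Bn n) g by rewrite /Bn /Yop exprS mulrA.
  rewrite /Yop Bn_conv -/(Yop _ g) Yop_conv; congr (_ + _).
rewrite /An (@conv_extr _ psi _ _ f E) conv_addr -!conv_assoc; congr (_ + _).
rewrite (@conv_extl _ _ (eps LS)) ?conv_epsl //.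
exact: conv_psi_phi.
Qed.
End Phi.

Arguments copF : simpl never.
Arguments cop : simpl never.

Section Final.
Variable F : numClosedFieldType.
Variable phi : tree -> laurent F.
Local Notation LS := (LS F).
Local Notation psi := (psi phi).
Local Notation phiF := (phiF phi).
Local Notation An := (An phi).

Lemma sval_sum I (s : seq I) (G : I -> LS) j : sval (\sum_(i <- s) G i) j = \sum_(i <- s) sval (G i) j.
Proof.
elim: s => [|i s IH]; first by rewrite !big_nil LS0_val.
by rewrite !big_cons LSadd_val IH.
Qed.

Lemma sval_cstM c (g : LS) j : sval (cst c * g) j = c * sval g j.
Proof.
by rewrite -{1}(toLS_rep g) -toLS_scale toLS_val ls_scaleE lcoef_repf.
Qed.

Lemma toLS_convF g f : toLS (convF phi g f) = conv psi (fun h => toLS (g h) * phiF h) f.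
Proof.
rewrite /convF toLS_sum big_map; apply: eq_bigr => p _.
by rewrite !toLS_mulE toLS_charL toLS_charF.
Qed.

Lemma toLS_convL g w : toLS (convL phi g w) = \sum_(x <- w) cst x.1 * toLS (convF phi g x.2).
Proof. by rewrite /convL toLS_sum big_map; apply: eq_bigr => x _; rewrite toLS_scale. Qed.

Lemma toLS_convF_n n f :
  toLS (convF phi (fun h => ls_const ((fnodes h)%:R ^+ n : F)) f) = An n f.
Proof.
rewrite toLS_convF; apply: conv_extr => h.
by rewrite /Bn -/(cst _) cstX cst_nat.
Qed.

Lemma toLS_convF_1 f :
  toLS (convF phi (fun h => ls_const ((fnodes h)%:R : F)) f) = An 1 f.
Proof.
rewrite toLS_convF; apply: conv_extr => h.
by rewrite /Bn -/(cst _) cst_nat expr1.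
Qed.

Lemma forest_w m g : (forall w, zp m (toLS (convL phi g w))) <-> (forall f, zp m (toLS (convF phi g f))).
Proof.
split=> H.
  move=> f; have := H [:: (1, f)]; by rewrite toLS_convL big_cons big_nil addr0 /= cst1 mul1r.
move=> w; rewrite toLS_convL; apply: zp_sum => x; exact: zp_cstM.
Qed.

Lemma zp_eps m f : zp m (eps LS f).
Proof. case: f => [|x f] /=; last exact: zp0. rewrite -cst1; apply: zp_le (zp_cst _); lia. Qed.

Lemma core : (forall f, zp 1 (An 1 f)) -> forall n f, zp n (An n f).
Proof.
move=> H1; elim=> [|n IH] f; first by rewrite An0; exact: zp_eps.
rewrite An_rec; apply: zpD.
  rewrite -add1n /conv; apply: zp_sum => p; exact: zpM.
rewrite -cst_nat; apply: zp_cstM; apply: zp_le (IH f); lia.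
Qed.

Definition ex (c : F) : LS := toLS (ls_exp c).
Lemma zp_ex c : zp 0 (ex c).
Proof. move=> j Hj; rewrite toLS_val lcoef_low //. Qed.
Lemma ex_val c (i : nat) : sval (ex c) i%:Z = c ^+ i / (i`!)%:R.
Proof.
have := lcoef_at (ls_exp c) i; rewrite /= subr0 => <-. by [].
Qed.

Definition Xp (p : forest * forest) : LS := psi p.1 * phiF p.2.
Definition Kf f := foldr (fun p m => maxn (Kof (Xp p)) m) 0%N (copF f).

Lemma all_foldr_max T (G : T -> nat) (s : seq T) :
  all (fun x => G x <= foldr (fun y m => maxn (G y) m) 0 s)%N s.
Proof.
elim: s => [|x s IH] //=; rewrite leq_maxl /=.
by apply: sub_all IH => y Hy; rewrite (leq_trans Hy) // leq_maxr.
Qed.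

Lemma Kf_all f : all (fun p => Kof (Xp p) <= Kf f)%N (copF f).
Proof. exact: all_foldr_max. Qed.

Lemma zp_Xp K p : (Kof (Xp p) <= K)%N -> zp K (Xp p).
Proof. by move=> H; apply: zp_le H _ => j Hj; apply: KofP. Qed.

Lemma An_val n f k : sval (An n f) k = \sum_(p <- copF f) (fnodes p.2)%:R ^+ n * sval (Xp p) k.
Proof.
rewrite /An /conv sval_sum; apply: eq_bigr => p _.
by rewrite /Bn -cst_nat -cstX mulrCA sval_cstM.
Qed.

Lemma zp_An n f : zp (Kf f) (An n f).
Proof.
move=> k Hk; rewrite An_val (eq_big_all (Kf_all f) (G' := fun _ => 0)) ?big1 // => p Hp.
by rewrite (zp_Xp Hp) ?mulr0.
Qed.

Definition Es s f := toLS (convF phi (fun h => ls_exp (s * (fnodes h)%:R)) f).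

Lemma Es_val s f j : sval (Es s f) j =
  if (0 <= j + (Kf f)%:Z)%R then
    \sum_(i < (absz (j + (Kf f)%:Z)).+1) s ^+ i / (i`!)%:R * sval (An i f) (j - i%:Z)
  else 0.
Proof.
rewrite /Es toLS_convF /conv sval_sum.
rewrite (eq_big_all (Kf_all f) (G' := fun p => if (0 <= j + (Kf f)%:Z)%R then
    \sum_(i < (absz (j + (Kf f)%:Z)).+1) sval (ex (s * (fnodes p.2)%:R)) i%:Z * sval (Xp p) (j - i%:Z)
  else 0)); last first.
  move=> p Hp; rewrite mulrCA -/(ex _) -/(Xp p).
  exact: (mul_coef0 _ (zp_ex _) (zp_Xp Hp)).
case: ifP => _; last by rewrite big1.
rewrite exchange_big /=; apply: eq_bigr => i _.
rewrite An_val big_distrr /=; apply: eq_bigr => p _.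
have := ex_val (s * (fnodes p.2)%:R) i; rewrite /ex toLS_val => ->.
rewrite exprMn; ring.
Qed.


Lemma dir23 : (forall n f, zp n (An n f)) -> forall s f, zp 0 (Es s f).
Proof.
move=> H s f j Hj; rewrite Es_val; case: ifP => // _.
apply: big1 => -[i Hi] _ /=; rewrite H ?mulr0 //; lia.
Qed.

Lemma dir32 : (forall s f, zp 0 (Es s f)) -> forall n f, zp n (An n f).
Proof.
move=> H n f i0 Hi0.
case: (ltP i0 (- (Kf f)%:Z)) => HK; first exact: zp_An.
set j := i0 + n%:Z.
have Hj : (j < - (0%N)%:Z)%R by rewrite /j; lia.
have HjK : (0 <= j + (Kf f)%:Z)%R by rewrite /j; lia.
set N := absz (j + (Kf f)%:Z).
have HnN : (n <= N)%N by rewrite /N /j; lia.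
pose P : {poly F} := \poly_(i < N.+1) (sval (An i f) (j - i%:Z) / (i`!)%:R).
have HP : forall x, P.[x] = 0.
  move=> x; rewrite horner_poly; transitivity (sval (Es x f) j); last exact: H x f j Hj.
  rewrite Es_val ifT // -/N; apply: eq_bigr => i _; ring.
have P0 : P = 0.
  apply: (@roots_geq_poly_eq0 _ P [seq i%:R | i <- iota 0 N.+1]).
  - by apply/allP => y /mapP [i _ ->]; rewrite /root HP.
  - rewrite map_inj_uniq ?iota_uniq // => a b /eqP; rewrite eqr_nat => /eqP.
    by [].
  - by rewrite size_map size_iota size_poly.
have := congr1 (fun q : {poly F} => q`_n) P0.
rewrite coef_poly coef0 ltnS HnN => /eqP; rewrite mulf_eq0 invr_eq0 pnatr_eq0.
have -> : (n`! == 0)%N = false by apply/negbTE; rewrite -lt0n fact_gt0.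
rewrite orbF => /eqP.
by have -> : j - n%:Z = i0 by rewrite /j; lia.
Qed.
End Final.

Theorem mainTheorem16 (F : numClosedFieldType) (phi : tree -> laurent F)
  (Hphi : is_character phi) :
  ((forall w : lcomb F,
      in_zpow 1 (convL phi (fun f => ls_const ((fnodes f)%:R : F)) w)) <->
   (forall (n : nat) (w : lcomb F),
      in_zpow n (convL phi (fun f => ls_const ((fnodes f)%:R ^+ n : F)) w)))
  /\
  ((forall (n : nat) (w : lcomb F),
      in_zpow n (convL phi (fun f => ls_const ((fnodes f)%:R ^+ n : F)) w)) <->
   (forall (s : F) (w : lcomb F),
      in_zpow 0 (convL phi (fun f => ls_exp (s * (fnodes f)%:R)) w))).
Proof.
have E2 : (forall (n : nat) (w : lcomb F),
      in_zpow n (convL phi (fun f => ls_const ((fnodes f)%:R ^+ n : F)) w)) <->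
    (forall n f, zp n (An phi n f)).
  split=> H n.
    move=> f; rewrite -toLS_convF_n; move: f; apply/forest_w; exact: H.
  apply/forest_w => f; rewrite toLS_convF_n; exact: H.
have E1 : (forall w : lcomb F,
      in_zpow 1 (convL phi (fun f => ls_const ((fnodes f)%:R : F)) w)) <->
    (forall f, zp 1 (An phi 1 f)).
  split=> H.
    move=> f; rewrite -toLS_convF_1; move: f; apply/forest_w; exact: H.
  apply/forest_w => f; rewrite toLS_convF_1; exact: H.
have E3 : (forall (s : F) (w : lcomb F),
      in_zpow 0 (convL phi (fun f => ls_exp (s * (fnodes f)%:R)) w)) <->
    (forall s f, zp 0 (Es phi s f)).
  split=> H s.
    apply/forest_w; exact: H.
  apply/forest_w; exact: H.
rewrite E1 E2 E3; split; split.
- exact: core.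
- by move=> H; apply: H.
- exact: dir23.
- exact: dir32.
Qed.
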